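(* Let $r\ge 2$ be an even integer and let $u(x,t)$ be a sufficiently smooth (e.g. $C^3$) function on $[a,b]\times I$, $I$ a time interval, with $u(a,t)=u(b,t)=0$. Then the following are equivalent: (i) $u$ satisfies $$\big(|u_x|^{r-2}u_x\big)_{xt}+\big(|u_x|^{r-2}u_x\big)_x u_x+\Big(\big(|u_x|^{r-2}u_x\big)_x u\Big)_x=0;$$ (ii) there is a function $c(t)$ such that $$|u_x|^{r-2}u_{xt}+\frac1r|u_x|^r+|u_x|^{r-2}u_{xx}u=c(t);$$ (iii) there is a function $c(t)$ such that $$\big(|u_x|^{r-2}u_x\big)_t+\big(|u_x|^{r-2}u\,u_x\big)_x=\frac1r|u_x|^r+c(t).$$ (The functions $c(t)$ in (ii) and (iii) need not coincide.)
   Context: Subscripts denote partial derivatives. Equation (i) is called the $r$-Hunter-Saxton equation on $[a,b]$ with boundary conditions $u(a)=u(b)=0$. For $r=2$, (iii) reduces to the Hunter-Saxton equation $(u_t+uu_x)_x=\frac12u_x^2$ (up to the function $c(t)$). *)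

(* Defs.v *)
From Stdlib Require Import Reals Lra Lia List.
From Coquelicot Require Import Coquelicot.
Open Scope R_scope.

Definition dx (f : R -> R -> R) : R -> R -> R :=
  fun x t => Derive (fun y => f y t) x.

Definition dt (f : R -> R -> R) : R -> R -> R :=
  fun x t => Derive (fun s => f x s) t.

Inductive dir := DX | DT.

(* iterated partial derivative; the head of the list is applied last *)
Fixpoint pd (l : list dir) (f : R -> R -> R) : R -> R -> R :=
  match l with
  | nil => f
  | DX :: l' => dx (pd l' f)
  | DT :: l' => dt (pd l' f)
  end.

Definition C3_on (U : R * R -> Prop) (f : R -> R -> R) : Prop :=
  forall (l : list dir) (x t : R), U (x, t) ->
    ((length l <= 3)%nat ->
       continuous (fun p : R * R => pd l f (fst p) (snd p)) (x, t)) /\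
    ((length l < 3)%nat ->
       ex_derive (fun y => pd l f y t) x /\ ex_derive (fun s => pd l f x s) t).

Definition is_interval (I : R -> Prop) : Prop :=
  forall s1 s2 s, I s1 -> I s2 -> s1 <= s <= s2 -> I s.

Definition wfun (r : nat) (u : R -> R -> R) : R -> R -> R :=
  fun x t => Rabs (dx u x t) ^ (r - 2) * dx u x t.

(* Main.v *)
Require Import Defs.
From Stdlib Require Import Reals Lra Lia List.
From Coquelicot Require Import Coquelicot.
Open Scope R_scope.

Lemma loc2 (U : R * R -> Prop) x t : open U -> U (x,t) ->
  exists eps : posreal, forall y s, Rabs (y - x) < eps -> Rabs (s - t) < eps -> U (y,s).
Proof.
  intros HU Hx. destruct (HU _ Hx) as [eps He]. exists eps. intros y s H1 H2.
  apply He. split; assumption.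
Qed.

Lemma locx (U : R * R -> Prop) x t : open U -> U (x,t) -> locally x (fun y => U (y,t)).
Proof.
  intros HU Hx. destruct (loc2 U x t HU Hx) as [eps He]. exists eps. intros y Hy.
  apply He. exact Hy. rewrite Rminus_diag, Rabs_R0. apply cond_pos.
Qed.

Lemma loct (U : R * R -> Prop) x t : open U -> U (x,t) -> locally t (fun s => U (x,s)).
Proof.
  intros HU Hx. destruct (loc2 U x t HU Hx) as [eps He]. exists eps. intros y Hy.
  apply He. rewrite Rminus_diag, Rabs_R0. apply cond_pos. exact Hy.
Qed.

Lemma exdx U u l x t : C3_on U u -> U (x,t) -> (length l < 3)%nat -> ex_derive (fun y => pd l u y t) x.
Proof. intros HC HU Hl. apply (proj2 (HC l x t HU) Hl). Qed.
Lemma exdt U u l x t : C3_on U u -> U (x,t) -> (length l < 3)%nat -> ex_derive (fun s => pd l u x s) t.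
Proof. intros HC HU Hl. apply (proj2 (HC l x t HU) Hl). Qed.

Lemma Rabs_even m z : Nat.Even m -> Rabs z ^ m = z ^ m.
Proof. intros [k ->]. rewrite !pow_mult, pow2_abs. reflexivity. Qed.

Lemma sym U u x t : open U -> C3_on U u -> U (x,t) ->
  dt (dx (dx u)) x t = dx (dt (dx u)) x t.
Proof.
  intros HO HC HU. symmetry. unfold dx at 1, dt at 2.
  apply (Schwarz (dx u)).
  - destruct (loc2 U x t HO HU) as [eps He]. exists eps. intros y s H1 H2.
    pose proof (He y s H1 H2) as Hy.
    repeat split.
    + apply (exdx U u (DX::nil)); auto.
    + apply (exdt U u (DX::nil)); auto.
    + apply (exdx U u (DT::DX::nil)); auto.
    + apply (exdt U u (DX::DX::nil)); auto.
  - apply continuity_2d_pt_filterlim. apply (proj1 (HC (DX::DT::DX::nil) x t HU)). simpl; lia.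
  - apply continuity_2d_pt_filterlim. apply (proj1 (HC (DT::DX::DX::nil) x t HU)). simpl; lia.
Qed.

Lemma deriv_zero_on f a b x c : a < b -> a <= x <= b -> ex_derive f x ->
  (forall y, a <= y <= b -> f y = c) -> Derive f x = 0.
Proof.
  intros Hab Hx Hd Hc.
  pose proof (proj1 (is_derive_Reals _ _ _) (Derive_correct _ _ Hd)) as Hl.
  set (l := Derive f x) in *.
  destruct (Req_dec l 0) as [|Hn]; auto. exfalso.
  destruct (Hl (Rabs l) (Rabs_pos_lt _ Hn)) as [delta Hde].
  set (d := Rmin (delta/2) ((b-a)/2)).
  assert (Hd0 : 0 < d). { unfold d. apply Rmin_pos. pose proof (cond_pos delta); lra. lra. }
  assert (Hd1 : d <= delta/2) by apply Rmin_l.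
  assert (Hd2 : d <= (b-a)/2) by apply Rmin_r.
  pose proof (cond_pos delta).
  destruct (Rle_dec (x + d) b) as [Hle|Hgt].
  - assert (Hne : d <> 0) by lra.
    specialize (Hde d Hne). rewrite Rabs_right in Hde by lra.
    specialize (Hde ltac:(lra)).
    rewrite (Hc (x+d)) in Hde by lra. rewrite (Hc x) in Hde by lra.
    replace ((c - c)/d - l) with (- l) in Hde by (field; lra).
    rewrite Rabs_Ropp in Hde. lra.
  - assert (Hne : -d <> 0) by lra.
    specialize (Hde (-d) Hne). rewrite Rabs_Ropp, Rabs_right in Hde by lra.
    specialize (Hde ltac:(lra)).
    rewrite (Hc (x+-d)) in Hde by lra. rewrite (Hc x) in Hde by lra.
    replace ((c - c)/(-d) - l) with (- l) in Hde by (field; lra).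
    rewrite Rabs_Ropp in Hde. lra.
Qed.

Definition E n u y t := dx u y t ^ n * dt (dx u) y t + / INR (S (S n)) * dx u y t ^ (S (S n))
   + dx u y t ^ n * dx (dx u) y t * u y t.

Ltac exs HC HU := repeat split;
  first [ apply (exdx _ _ nil _ _ HC HU); simpl; lia
        | apply (exdx _ _ (DX::nil) _ _ HC HU); simpl; lia
        | apply (exdx _ _ (DT::DX::nil) _ _ HC HU); simpl; lia
        | apply (exdx _ _ (DX::DX::nil) _ _ HC HU); simpl; lia
        | apply (exdt _ _ nil _ _ HC HU); simpl; lia
        | apply (exdt _ _ (DX::nil) _ _ HC HU); simpl; lia
        | apply (exdt _ _ (DX::DX::nil) _ _ HC HU); simpl; lia ].

Lemma E_der U u n x t : C3_on U u -> U (x,t) ->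
  is_derive (fun y => E n u y t) x
   (INR n * dx(dx u) x t * dx u x t ^ pred n * dt (dx u) x t + dx u x t ^ n * dx (dt (dx u)) x t
    + dx (dx u) x t * dx u x t ^ S n
    + (INR n * dx (dx u) x t * dx u x t ^ pred n * dx(dx u) x t + dx u x t ^n * dx(dx(dx u)) x t) * u x t
    + dx u x t ^ n * dx (dx u) x t * dx u x t).
Proof.
  intros HC HU. unfold E. auto_derive.
  - exs HC HU.
  - cbv beta delta [dx dt]. change (match n with 0%nat => 1 | S _ => INR n + 1 end) with (INR (S n)). rewrite <- !tech_pow_Rmult. rewrite !S_INR. field.
    pose proof (pos_INR n); lra.
Qed.

Ltac fin := cbv beta delta [dx dt];
  try change (match ?n with 0%nat => 1 | S _ => INR ?n + 1 end) with (INR (S n));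
  rewrite <- ?tech_pow_Rmult; rewrite ?S_INR; field.

Lemma wfunW n u y s : Nat.Even n -> wfun (S (S n)) u y s = dx u y s ^ S n.
Proof.
  intros Hn. unfold wfun. replace (S (S n) - 2)%nat with n by lia.
  rewrite Rabs_even by auto. simpl. ring.
Qed.

Lemma dxw U u n x t : Nat.Even n -> C3_on U u -> U (x,t) ->
  dx (wfun (S (S n)) u) x t = INR (S n) * dx (dx u) x t * dx u x t ^ n.
Proof.
  intros Hn HC HU. unfold dx at 1.
  rewrite (Derive_ext _ (fun y => dx u y t ^ S n)) by (intro; apply wfunW; auto).
  apply is_derive_unique. auto_derive. exs HC HU. fin.
Qed.

Lemma termA U u n x t : Nat.Even n -> open U -> C3_on U u -> U (x,t) ->
  dt (dx (wfun (S (S n)) u)) x t = INR (S n) * (dt (dx (dx u)) x t * dx u x t ^ n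
     + dx (dx u) x t * (INR n * dt (dx u) x t * dx u x t ^ pred n)).
Proof.
  intros Hn HO HC HU. unfold dt at 1.
  rewrite (Derive_ext_loc _ (fun s => INR (S n) * dx (dx u) x s * dx u x s ^ n)).
  2: { destruct (loct U x t HO HU) as [eps He]. exists eps. intros s Hs.
       apply (dxw U); auto. }
  apply is_derive_unique. auto_derive. exs HC HU. fin.
Qed.

Lemma termC U u n x t : Nat.Even n -> open U -> C3_on U u -> U (x,t) ->
  dx (fun y s => dx (wfun (S (S n)) u) y s * u y s) x t =
  INR (S n) * ((dx (dx (dx u)) x t * dx u x t ^ n
     + dx (dx u) x t * (INR n * dx (dx u) x t * dx u x t ^ pred n)) * u x t
     + dx (dx u) x t * dx u x t ^ n * dx u x t).
Proof.
  intros Hn HO HC HU. unfold dx at 1.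
  rewrite (Derive_ext_loc _ (fun y => INR (S n) * dx (dx u) y t * dx u y t ^ n * u y t)).
  2: { destruct (locx U x t HO HU) as [eps He]. exists eps. intros s Hs.
       rewrite (dxw U); auto. }
  apply is_derive_unique. auto_derive. exs HC HU. fin.
Qed.

Lemma termW U u n x t : Nat.Even n -> C3_on U u -> U (x,t) ->
  dt (wfun (S (S n)) u) x t = INR (S n) * dt (dx u) x t * dx u x t ^ n.
Proof.
  intros Hn HC HU. unfold dt at 1.
  rewrite (Derive_ext _ (fun s => dx u x s ^ S n)) by (intro; apply wfunW; auto).
  apply is_derive_unique. auto_derive. exs HC HU. fin.
Qed.

Lemma termIII U u n x t : Nat.Even n -> C3_on U u -> U (x,t) ->
  dx (fun y s => Rabs (dx u y s) ^ n * u y s * dx u y s) x t =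
  INR (S n) * dx (dx u) x t * dx u x t ^ n * u x t + dx u x t ^ S n * dx u x t.
Proof.
  intros Hn HC HU. unfold dx at 1.
  rewrite (Derive_ext _ (fun y => dx u y t ^ S n * u y t)).
  2: { intro y. rewrite Rabs_even by auto. simpl. ring. }
  apply is_derive_unique. auto_derive. exs HC HU. fin.
Qed.

Theorem mainTheorem1 (r : nat) (a b : R) (I : R -> Prop) (u : R -> R -> R)
  (U : R * R -> Prop) :
  (2 <= r)%nat -> Nat.Even r ->
  a < b -> is_interval I ->
  open U -> (forall x t, a <= x <= b -> I t -> U (x, t)) -> C3_on U u ->
  (forall t, I t -> u a t = 0 /\ u b t = 0) ->
  let w := wfun r u in
  ( (forall x t, a <= x <= b -> I t ->
       dt (dx w) x t + dx w x t * dx u x t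
       + dx (fun y s => dx w y s * u y s) x t = 0)
    <->
    (exists c : R -> R, forall x t, a <= x <= b -> I t ->
       Rabs (dx u x t) ^ (r - 2) * dt (dx u) x t
       + / INR r * Rabs (dx u x t) ^ r
       + Rabs (dx u x t) ^ (r - 2) * dx (dx u) x t * u x t = c t) )
  /\
  ( (exists c : R -> R, forall x t, a <= x <= b -> I t ->
       Rabs (dx u x t) ^ (r - 2) * dt (dx u) x t
       + / INR r * Rabs (dx u x t) ^ r
       + Rabs (dx u x t) ^ (r - 2) * dx (dx u) x t * u x t = c t)
    <->
    (exists c : R -> R, forall x t, a <= x <= b -> I t ->
       dt w x t
       + dx (fun y s => Rabs (dx u y s) ^ (r - 2) * u y s * dx u y s) x t
       = / INR r * Rabs (dx u x t) ^ r + c t) ).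
Proof.
  intros Hr Hev Hab HI HO HUab HC Hbc w. subst w.
  assert (Hn : exists n, r = S (S n) /\ Nat.Even n).
  { destruct Hev as [k Hk]. exists (2 * (k - 1))%nat. split. lia. exists (k-1)%nat. reflexivity. }
  destruct Hn as [n [-> Hn]].
  assert (Hev2 : Nat.Even (S (S n))) by (destruct Hn as [k Hk]; exists (S k); lia).
  replace (S (S n) - 2)%nat with n by lia.
  assert (HSn : INR (S n) <> 0) by (rewrite S_INR; pose proof (pos_INR n); lra).
  assert (HE : forall x t,
     Rabs (dx u x t) ^ n * dt (dx u) x t + / INR (S (S n)) * Rabs (dx u x t) ^ S (S n)
     + Rabs (dx u x t) ^ n * dx (dx u) x t * u x t = E n u x t).
  { intros x t. unfold E. rewrite !Rabs_even by auto. reflexivity. }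
  assert (Hi : forall x t, U (x,t) ->
     dt (dx (wfun (S (S n)) u)) x t + dx (wfun (S (S n)) u) x t * dx u x t
       + dx (fun y s => dx (wfun (S (S n)) u) y s * u y s) x t
     = INR (S n) * Derive (fun y => E n u y t) x).
  { intros x t HU. rewrite (is_derive_unique (fun y : R => E n u y t) x _ (E_der U u n x t HC HU)).
    rewrite (termA U), (termC U), (dxw U), (sym U u x t) by auto.
    rewrite <- !tech_pow_Rmult. ring. }
  assert (Hiii : forall x t, U (x,t) ->
     dt (wfun (S (S n)) u) x t
       + dx (fun y s => Rabs (dx u y s) ^ n * u y s * dx u y s) x t
     = / INR (S (S n)) * Rabs (dx u x t) ^ S (S n) + INR (S n) * E n u x t).
  { intros x t HU. rewrite (termW U), (termIII U) by auto. unfold E.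
    rewrite !Rabs_even by auto. rewrite <- !tech_pow_Rmult. rewrite !S_INR. field.
    pose proof (pos_INR n); lra. }
  split; split.
  - intros H. exists (fun t => E n u a t). intros x t Hx Ht. rewrite HE.
    assert (HD : forall y, a <= y <= b -> Derive (fun z => E n u z t) y = 0).
    { intros y Hy. pose proof (H y t Hy Ht) as H1. rewrite Hi in H1 by auto.
      apply Rmult_integral in H1. destruct H1; [contradiction|assumption]. }
    destruct (Req_dec x a) as [->|Hxa]; [reflexivity|].
    destruct (MVT_cor2 (fun z => E n u z t) (fun y => Derive (fun z => E n u z t) y) a x)
      as [c [Hc1 Hc2]].
    + lra.
    + intros c Hc. apply is_derive_Reals. apply Derive_correct.
      eexists. apply (E_der U u n c t HC). apply HUab; auto; lra.
    + rewrite HD in Hc1 by lra. lra.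
  - intros [c H] x t Hx Ht. rewrite Hi by auto.
    rewrite (deriv_zero_on _ a b x (c t)); [ring|auto|auto| |].
    + eexists. apply (E_der U u n x t HC). auto.
    + intros y Hy. rewrite <- HE. apply H; auto.
  - intros [c H]. exists (fun t => INR (S n) * c t). intros x t Hx Ht.
    rewrite Hiii by auto. rewrite <- HE, H; auto.
  - intros [c H]. exists (fun t => c t / INR (S n)). intros x t Hx Ht.
    pose proof (H x t Hx Ht) as H1. rewrite Hiii in H1 by auto.
    rewrite HE. apply (Rmult_eq_reg_l (INR (S n))); auto.
    field_simplify; auto. lra.
Qed.
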